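(* Let $\mathsf{X}$ be a finite set of propositional variables. Every property $\|\phi\|_{\mathsf{X}}$ with $\phi$ a $\mathsf{BSML}$-formula over $\mathsf{X}$ is union closed and invariant under $k$-bisimulation for some $k$, but not every state property over $\mathsf{X}$ that is union closed and invariant under $k$-bisimulation for some $k$ is of the form $\|\phi\|_{\mathsf{X}}$ for a $\mathsf{BSML}$-formula $\phi$.
   Context: Formulas of $\mathsf{BSML}$: $\phi ::= p \mid \neg\phi \mid (\phi\wedge\phi) \mid (\phi\vee\phi) \mid \Diamond\phi \mid \mathrm{NE}$. A model over $\mathsf{X}$ is $M=(W,R,V)$, $V:\mathsf{X}\to\wp(W)$; a state is $s\subseteq W$. Support/anti-support: $s\models p$ iff $s\subseteq V(p)$; $s\dashv p$ iff $s\cap V(p)=\emptyset$; $s\models\mathrm{NE}$ iff $s\ne\emptyset$; $s\dashv\mathrm{NE}$ iff $s=\emptyset$; $s\models\neg\phi$ iff $s\dashv\phi$; $s\dashv\neg\phi$ iff $s\models\phi$; $s\models\phi\wedge\psi$ iff both; $s\dashv\phi\wedge\psi$ iff $s=t\cup u$ with $t\dashv\phi$, $u\dashv\psi$; $s\models\phi\vee\psi$ iff $s=t\cup u$ with $t\models\phi$, $u\models\psi$; $s\dashv\phi\vee\psi$ iff $s\dashv\phi$ and $s\dashv\psi$; $s\models\Diamond\phi$ iff each $w\in s$ has a nonempty $t\subseteq R[w]$ with $t\models\phi$; $s\dashv\Diamond\phi$ iff $R[w]\dashv\phi$ for all $w\in s$. A state property over $\mathsf{X}$ is a class of pointed state models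 $(M,s)$; $\|\phi\|_{\mathsf{X}}=\{(M,s):M,s\models\phi\}$. World $k$-bisimilarity: $w\rightleftharpoons_0w'$ iff agreement on $\mathsf{X}$; $w\rightleftharpoons_{k+1}w'$ iff $w\rightleftharpoons_0w'$ and back-and-forth between $R[w],R'[w']$ w.r.t. $\rightleftharpoons_k$. State $k$-bisimilarity: each world of $s$ is $k$-bisimilar to some world of $s'$ and vice versa. Invariance under $k$-bisimulation: $(M,s)\in\mathcal{P}$ and $M,s\rightleftharpoons_kM',s'$ imply $(M',s')\in\mathcal{P}$. Union closed: $(M,s)\in\mathcal{P}$ for all $s$ in nonempty $S$ implies $(M,\bigcup S)\in\mathcal{P}$. *)

(* Defs.v *)
From mathcomp Require Import all_boot.
Set Implicit Arguments. Unset Strict Implicit. Unset Printing Implicit Defensive.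

Inductive form (X : Type) : Type :=
| Atom : X -> form X
| Neg  : form X -> form X
| And  : form X -> form X -> form X
| Or   : form X -> form X -> form X
| Dia  : form X -> form X
| NE   : form X.

Record model (X : Type) : Type := Model {
  mW : Type;
  mR : mW -> mW -> Prop;
  mV : X -> mW -> Prop }.
Arguments mW {X} _.
Arguments mR {X} _ _ _.
Arguments mV {X} _ _ _.

Definition state (X : Type) (M : model X) := mW M -> Prop.

Definition is_union (W : Type) (s t u : W -> Prop) : Prop :=
  forall w, s w <-> (t w \/ u w).

(* sem true  phi s  : s supports phi   (M, s |= phi)
   sem false phi s  : s anti-supports phi (M, s =| phi) *)
Fixpoint sem (X : Type) (M : model X) (b : bool) (phi : form X)
  (s : mW M -> Prop) {struct phi} : Prop :=
  match phi with
  | Atom p => if b then forall w, s w -> mV M p w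
              else forall w, s w -> ~ mV M p w
  | NE => if b then exists w, s w else forall w, ~ s w
  | Neg psi => sem (negb b) psi s
  | And a c => if b then sem true a s /\ sem true c s
               else exists t u, is_union s t u /\ sem false a t /\ sem false c u
  | Or a c => if b then exists t u, is_union s t u /\ sem true a t /\ sem true c u
              else sem false a s /\ sem false c s
  | Dia psi => if b then
                 forall w, s w -> exists t : mW M -> Prop,
                   (exists v, t v) /\ (forall v, t v -> mR M w v) /\ sem true psi t
               else forall w, s w -> sem false psi (mR M w)
  end.
Arguments sem {X} M b phi s.

Definition supp (X : Type) (M : model X) (phi : form X) (s : mW M -> Prop) :=
  sem M true phi s.
Arguments supp {X} M phi s.

Definition sprop (X : Type) := forall M : model X, (mW M -> Prop) -> Prop.

Definition prop_of (X : Type) (phi : form X) : sprop X :=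
  fun M s => supp M phi s.

Fixpoint wbisim (X : Type) (M M' : model X) (k : nat) (w : mW M) (w' : mW M')
  {struct k} : Prop :=
  (forall p, mV M p w <-> mV M' p w') /\
  match k with
  | 0 => True
  | k'.+1 =>
      (forall v, mR M w v -> exists v', mR M' w' v' /\ wbisim k' v v') /\
      (forall v', mR M' w' v' -> exists v, mR M w v /\ wbisim k' v v')
  end.
Arguments wbisim {X} M M' k w w'.

Definition sbisim (X : Type) (M M' : model X) (k : nat)
  (s : mW M -> Prop) (s' : mW M' -> Prop) : Prop :=
  (forall w, s w -> exists w', s' w' /\ wbisim M M' k w w') /\
  (forall w', s' w' -> exists w, s w /\ wbisim M M' k w w').

Definition bisim_invariant (X : Type) (k : nat) (P : sprop X) : Prop :=
  forall (M M' : model X) (s : mW M -> Prop) (s' : mW M' -> Prop),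
    P M s -> sbisim k s s' -> P M' s'.

Definition union_closed (X : Type) (P : sprop X) : Prop :=
  forall (M : model X) (S : (mW M -> Prop) -> Prop),
    (exists s, S s) -> (forall s, S s -> P M s) ->
    P M (fun w => exists s, S s /\ s w).
Arguments Atom {X} _.
Arguments Neg {X} _.
Arguments And {X} _ _.
Arguments Or {X} _ _.
Arguments Dia {X} _.
Arguments NE {X}.
Arguments prop_of {X} phi M s.
Arguments sbisim {X} M M' k s s'.
Arguments bisim_invariant {X} k P.
Arguments union_closed {X} P.
Arguments is_union {W} s t u.

(* Main.v *)
Require Import Defs.
From Stdlib Require Import Classical.
From mathcomp Require Import all_boot.

Fixpoint md {X : Type} (phi : form X) : nat :=
  match phi with
  | Atom _ => 0
  | NE => 0
  | Neg p => md p
  | And a c => maxn (md a) (md c)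
  | Or a c => maxn (md a) (md c)
  | Dia p => (md p).+1
  end.

Lemma uc (X : Type) (phi : form X) : forall b (M : model X) (S : (mW M -> Prop) -> Prop),
  (exists s, S s) -> (forall s, S s -> sem M b phi s) ->
  sem M b phi (fun w => exists s, S s /\ s w).
Proof.
induction phi as [p|p IH|a IHa c IHc|a IHa c IHc|p IH|]; intros b.
- destruct b; simpl; intros M S _ H w [s [Hs sw]]; exact (H s Hs w sw).
- simpl; intros; apply IH; auto.
- destruct b; simpl.
  + intros M S Hne H; split; [apply IHa|apply IHc]; auto; intros s Hs; destruct (H s Hs); auto.
  + intros M S [s0 Hs0] H.
    exists (fun w => exists t, (exists s, S s /\ exists u, is_union s t u /\ sem M false a t /\ sem M false c u) /\ t w).
    exists (fun w => exists u, (exists s, S s /\ exists t, is_union s t u /\ sem M false a t /\ sem M false c u) /\ u w).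
    split; [|split].
    * intro w; split.
      -- intros [s [Hs sw]]. destruct (H s Hs) as [t [u [Hu [Ht Hu2]]]].
         destruct (proj1 (Hu w) sw) as [tw|uw]; [left; exists t | right; exists u]; split; auto; exists s; split; auto; [exists u|exists t]; auto.
      -- intros [[t [[s [Hs [u [Hun _]]]] tw]] | [u [[s [Hs [t [Hun _]]]] uw]]]; exists s; split; auto; apply (Hun w); auto.
    * apply IHa.
      -- destruct (H s0 Hs0) as [t [u [Hun [Ht Hu]]]]. exists t, s0; split; auto; exists u; auto.
      -- intros t [s [Hs [u [_ [Ht _]]]]]; exact Ht.
    * apply IHc.
      -- destruct (H s0 Hs0) as [t [u [Hun [Ht Hu]]]]. exists u, s0; split; auto; exists t; auto.
      -- intros u [s [Hs [t [_ [_ Hu]]]]]; exact Hu.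
- destruct b; simpl.
  + intros M S [s0 Hs0] H.
    exists (fun w => exists t, (exists s, S s /\ exists u, is_union s t u /\ sem M true a t /\ sem M true c u) /\ t w).
    exists (fun w => exists u, (exists s, S s /\ exists t, is_union s t u /\ sem M true a t /\ sem M true c u) /\ u w).
    split; [|split].
    * intro w; split.
      -- intros [s [Hs sw]]. destruct (H s Hs) as [t [u [Hu [Ht Hu2]]]].
         destruct (proj1 (Hu w) sw) as [tw|uw]; [left; exists t | right; exists u]; split; auto; exists s; split; auto; [exists u|exists t]; auto.
      -- intros [[t [[s [Hs [u [Hun _]]]] tw]] | [u [[s [Hs [t [Hun _]]]] uw]]]; exists s; split; auto; apply (Hun w); auto.
    * apply IHa.
      -- destruct (H s0 Hs0) as [t [u [Hun [Ht Hu]]]]. exists t, s0; split; auto; exists u; auto.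
      -- intros t [s [Hs [u [_ [Ht _]]]]]; exact Ht.
    * apply IHc.
      -- destruct (H s0 Hs0) as [t [u [Hun [Ht Hu]]]]. exists u, s0; split; auto; exists t; auto.
      -- intros u [s [Hs [t [_ [_ Hu]]]]]; exact Hu.
  + intros M S Hne H; split; [apply IHa|apply IHc]; auto; intros s Hs; destruct (H s Hs); auto.
- destruct b; simpl; intros M S _ H w [s [Hs sw]]; exact (H s Hs w sw).
- destruct b; simpl.
  + intros M S [s Hs] H. destruct (H s Hs) as [w sw]. exists w, s; auto.
  + intros M S _ H w [s [Hs sw]]. exact (H s Hs w sw).
Qed.

Lemma uc2 (X : Type) (phi : form X) b (M : model X) (s u : mW M -> Prop) :
  sem M b phi s -> sem M b phi u ->
  sem M b phi (fun w => exists x, (x = s \/ x = u) /\ x w).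
Proof.
intros Hs Hu. apply uc. exists s; auto.
intros x [->| ->]; auto.
Qed.

Lemma conv (X : Type) (phi : form X) : forall b (M : model X) (s t u : mW M -> Prop),
  (forall w, s w -> t w) -> (forall w, t w -> u w) ->
  sem M b phi s -> sem M b phi u -> sem M b phi t.
Proof.
induction phi as [p|p IH|a IHa c IHc|a IHa c IHc|p IH|]; intros b.
- destruct b; simpl; intros M s t u st tu _ Hu w tw; exact (Hu w (tu w tw)).
- simpl; intros; eapply IH; eauto.
- destruct b; simpl.
  + intros M s t u st tu [H1 H2] [H3 H4]; split; eauto.
  + intros M s t u st tu [s1 [s2 [Hs [H1 H2]]]] [u1 [u2 [Hu [H3 H4]]]].
    exists (fun w => s1 w \/ (t w /\ u1 w)), (fun w => s2 w \/ (t w /\ u2 w)).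
    split; [|split].
    * intro w; split.
      -- intro tw. destruct (proj1 (Hu w) (tu w tw)); auto.
      -- intros [[H|[H _]]|[H|[H _]]]; auto; apply st; apply (Hs w); auto.
    * apply (IHa false M s1 _ (fun w => exists x, (x = s1 \/ x = u1) /\ x w)); auto.
      -- intros w [H|[_ H]]; [exists s1|exists u1]; auto.
      -- apply uc2; auto.
    * apply (IHc false M s2 _ (fun w => exists x, (x = s2 \/ x = u2) /\ x w)); auto.
      -- intros w [H|[_ H]]; [exists s2|exists u2]; auto.
      -- apply uc2; auto.
- destruct b; simpl.
  + intros M s t u st tu [s1 [s2 [Hs [H1 H2]]]] [u1 [u2 [Hu [H3 H4]]]].
    exists (fun w => s1 w \/ (t w /\ u1 w)), (fun w => s2 w \/ (t w /\ u2 w)).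
    split; [|split].
    * intro w; split.
      -- intro tw. destruct (proj1 (Hu w) (tu w tw)); auto.
      -- intros [[H|[H _]]|[H|[H _]]]; auto; apply st; apply (Hs w); auto.
    * apply (IHa true M s1 _ (fun w => exists x, (x = s1 \/ x = u1) /\ x w)); auto.
      -- intros w [H|[_ H]]; [exists s1|exists u1]; auto.
      -- apply uc2; auto.
    * apply (IHc true M s2 _ (fun w => exists x, (x = s2 \/ x = u2) /\ x w)); auto.
      -- intros w [H|[_ H]]; [exists s2|exists u2]; auto.
      -- apply uc2; auto.
  + intros M s t u st tu [H1 H2] [H3 H4]; split; eauto.
- destruct b; simpl; intros M s t u st tu _ Hu w tw; exact (Hu w (tu w tw)).
- destruct b; simpl.
  + intros M s t u st tu [w sw] _. exists w; auto.
  + intros M s t u st tu _ Hu w tw. exact (Hu w (tu w tw)).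
Qed.

Lemma wb_val (X : Type) (M M' : model X) k w w' :
  wbisim M M' k w w' -> forall p, mV M p w <-> mV M' p w'.
Proof. destruct k; simpl; tauto. Qed.

Lemma bis (X : Type) (phi : form X) : forall b (M M' : model X) k s s',
  md phi <= k -> sbisim M M' k s s' -> sem M b phi s -> sem M' b phi s'.
Proof.
induction phi as [p|p IH|a IHa c IHc|a IHa c IHc|p IH|]; intros b M M' k s s' Hk.
- destruct b; simpl; intros [Hf Hb] Hs w' sw'; destruct (Hb w' sw') as [w [sw Hw]];
  pose proof (@wb_val _ _ _ _ _ _ Hw p); specialize (Hs w sw); tauto.
- simpl; intros; eapply IH; eauto.
- simpl in Hk; rewrite geq_max in Hk; case/andP: Hk => Ha Hc.
  destruct b; simpl.
  + intros Hb [H1 H2]; split; eauto.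
  + intros [Hf Hb] [t [u [Hun [Ht Hu]]]].
    exists (fun w' => s' w' /\ exists w, t w /\ wbisim M M' k w w'),
           (fun w' => s' w' /\ exists w, u w /\ wbisim M M' k w w').
    split; [|split].
    * intro w'; split.
      -- intro sw'. destruct (Hb w' sw') as [w [sw Hw]].
         destruct (proj1 (Hun w) sw); [left|right]; split; eauto.
      -- intros [[H _]|[H _]]; auto.
    * apply (IHa false M M' k t); auto. split.
      -- intros w tw. destruct (Hf w (proj2 (Hun w) (or_introl tw))) as [w' [sw' Hw]].
         exists w'; split; eauto.
      -- intros w' [_ [w [tw Hw]]]; eauto.
    * apply (IHc false M M' k u); auto. split.
      -- intros w tw. destruct (Hf w (proj2 (Hun w) (or_intror tw))) as [w' [sw' Hw]].
         exists w'; split; eauto.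
      -- intros w' [_ [w [tw Hw]]]; eauto.
- simpl in Hk; rewrite geq_max in Hk; case/andP: Hk => Ha Hc.
  destruct b; simpl.
  + intros [Hf Hb] [t [u [Hun [Ht Hu]]]].
    exists (fun w' => s' w' /\ exists w, t w /\ wbisim M M' k w w'),
           (fun w' => s' w' /\ exists w, u w /\ wbisim M M' k w w').
    split; [|split].
    * intro w'; split.
      -- intro sw'. destruct (Hb w' sw') as [w [sw Hw]].
         destruct (proj1 (Hun w) sw); [left|right]; split; eauto.
      -- intros [[H _]|[H _]]; auto.
    * apply (IHa true M M' k t); auto. split.
      -- intros w tw. destruct (Hf w (proj2 (Hun w) (or_introl tw))) as [w' [sw' Hw]].
         exists w'; split; eauto.
      -- intros w' [_ [w [tw Hw]]]; eauto.
    * apply (IHc true M M' k u); auto. split.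
      -- intros w tw. destruct (Hf w (proj2 (Hun w) (or_intror tw))) as [w' [sw' Hw]].
         exists w'; split; eauto.
      -- intros w' [_ [w [tw Hw]]]; eauto.
  + intros Hb [H1 H2]; split; eauto.
- simpl in Hk. destruct k as [|k]; [by rewrite ltn0 in Hk|]. rewrite ltnS in Hk.
  destruct b; simpl.
  + intros [Hf Hb] Hs w' sw'. destruct (Hb w' sw') as [w [sw Hw]].
    destruct (Hs w sw) as [t [[v tv] [tR Ht]]].
    simpl in Hw. destruct Hw as [_ [Hfo Hba]].
    exists (fun v' => mR M' w' v' /\ exists v, t v /\ wbisim M M' k v v').
    split; [|split].
    * destruct (Hfo v (tR v tv)) as [v' [Rv' Hvv']]. exists v'; split; eauto.
    * intros v' [H _]; exact H.
    * apply (IH true M M' k t); auto. split.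
      -- intros v0 tv0. destruct (Hfo v0 (tR v0 tv0)) as [v' [Rv' Hv']].
         exists v'; split; eauto.
      -- intros v' [_ [v0 [tv0 Hv0]]]; eauto.
  + intros [Hf Hb] Hs w' sw'. destruct (Hb w' sw') as [w [sw Hw]].
    simpl in Hw. destruct Hw as [_ [Hfo Hba]].
    apply (IH false M M' k (mR M w)); auto. split; auto.
- destruct b; simpl.
  + intros [Hf Hb] [w sw]. destruct (Hf w sw) as [w' [sw' _]]; eauto.
  + intros [Hf Hb] Hs w' sw'. destruct (Hb w' sw') as [w [sw _]]. exact (Hs w sw).
Qed.

Definition Pc (X : Type) : sprop X := fun M s =>
  (forall w, ~ s w) \/
  ((exists w, s w /\ exists v, mR M w v) /\ (exists w, s w /\ forall v, ~ mR M w v)).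

Lemma Pc_uc (X : Type) : union_closed (@Pc X).
Proof.
intros M S [s0 Hs0] H.
destruct (classic (exists w, exists s, S s /\ s w)) as [[w [s [Hs sw]]] | Hn].
- destruct (H s Hs) as [Hemp | [[a [sa Ra]] [d [sd Rd]]]].
  + exfalso; exact (Hemp w sw).
  + right; split; [exists a; split; [exists s; auto | auto] | exists d; split; [exists s; auto| auto]].
- left; intros w Hw; apply Hn; exists w; exact Hw.
Qed.

Lemma Pc_inv (X : Type) : bisim_invariant 1 (@Pc X).
Proof.
intros M M' s s' Hs [Hf Hb].
destruct Hs as [Hemp | [[a [sa Ra]] [d [sd Rd]]]].
- left; intros w' sw'; destruct (Hb w' sw') as [w [sw _]]; exact (Hemp w sw).
- right. destruct Ra as [v Rv]. destruct (Hf a sa) as [a' [sa' Ha]].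
  simpl in Ha. destruct Ha as [_ [Hfo _]]. destruct (Hfo v Rv) as [v' [Rv' _]].
  split.
  + exists a'; split; [auto| exists v'; auto].
  + destruct (Hf d sd) as [d' [sd' Hd]]. simpl in Hd. destruct Hd as [_ [_ Hba]].
    exists d'; split; auto. intros v1 Rv1. destruct (Hba v1 Rv1) as [v0 [R0 _]].
    exact (Rd v0 R0).
Qed.

Theorem fact3p19 (X : finType) :
  (forall phi : form X,
      union_closed (prop_of phi) /\ exists k, bisim_invariant k (prop_of phi)) /\
  ~ (forall P : sprop X,
      union_closed P -> (exists k, bisim_invariant k P) ->
      exists phi : form X, forall (M : model X) (s : mW M -> Prop),
        P M s <-> prop_of phi M s).
Proof.
split.
- intro phi; split.
  + intros M S Hne H; apply uc; auto.
  + exists (md phi). intros M M' s s' Hs Hb. exact (@bis X phi true M M' (md phi) s s' (leqnn _) Hb Hs).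
- intro H. destruct (H (@Pc X) (@Pc_uc X) (ex_intro _ 1 (@Pc_inv X))) as [phi Hphi].
  pose M0 := {| mW := bool; mR := fun x (_ : bool) => x = true; mV := fun (_ : X) (_ : bool) => False |}.
  have Ht : prop_of phi M0 (fun w : bool => w = false).
  { apply (@conv X phi true M0 (fun _ => False) _ (fun _ => True)).
    - intros w [].
    - auto.
    - apply Hphi. left; auto.
    - apply Hphi. right; split.
      + exists true; split; [exact I| exists true; reflexivity].
      + exists false; split; [reflexivity| intros v Hv; discriminate]. }
  apply Hphi in Ht. destruct Ht as [Hemp | [[w [Hw [v Hv]]] _]].
  + exact (Hemp false erefl).
  + simpl in Hv. rewrite Hw in Hv. discriminate.
Qed.
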